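(* Let $w$ and $q$ be probability measures on $(\mathsf{Y},\mathcal{Y})$ with $D_\lambda(w\|q)\le\gamma$ for some $\gamma\in\mathbb{R}_+$ and $\lambda\in(1,\infty)$. Then for any $\eta\in(1,\lambda)$, $$0\le D_\eta(w\|q)-D_1(w\|q)\le\frac{2(\eta-1)}{e^2}\Big[1+e^{(\eta-1)\gamma}\Big(\frac{\gamma e^\tau}{2\tau}\Big)^2\Big],\qquad\tau=\frac{(\lambda-\eta)\gamma}{2}\wedge1.$$
   Context: Rényi divergence $D_\alpha(w\|q)=\frac{1}{\alpha-1}\ln E_\nu[(\frac{dw}{d\nu})^\alpha(\frac{dq}{d\nu})^{1-\alpha}]$ for $\alpha\in(0,\infty)\setminus\{1\}$ and $D_1(w\|q)=E_\nu[\frac{dw}{d\nu}\ln\frac{dw/d\nu}{dq/d\nu}]$, $\nu$ any dominating probability measure. *)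

(* Defs.v *)
From HB Require Import structures.
From mathcomp Require Import all_boot all_order all_algebra.
From mathcomp Require Import all_classical all_reals all_analysis.
Set Implicit Arguments. Unset Strict Implicit. Unset Printing Implicit Defensive.
Import Order.TTheory GRing.Theory Num.Theory.
Local Open Scope ring_scope.
Local Open Scope ereal_scope.

(* Rényi divergence expressed through densities f = dw/dnu, g = dq/dnu
   with respect to a dominating probability measure nu. *)
Section Renyi.
Context {d : measure_display} {Y : measurableType d} {R : realType}.

Definition eln (x : \bar R) : \bar R :=
  match x with
  | EFin r => if r == 0%R then -oo else (ln r)%:E
  | +oo => +oo
  | -oo => -oo
  end.

Definition renyi_integrand (a : R) (f g : Y -> R) (x : Y) : \bar R :=
  if [&& g x == 0%R, f x != 0%R & (1 < a)%R] then +oo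
  else ((f x `^ a) * (g x `^ (1 - a)))%:E.

Definition kl_integrand (f g : Y -> R) (x : Y) : \bar R :=
  if f x == 0%R then 0
  else if g x == 0%R then +oo
  else (f x * ln (f x / g x))%:E.

Definition renyi_div (nu : {measure set Y -> \bar R}) (f g : Y -> R) (a : R)
  : \bar R :=
  if a == 1%R then \int[nu]_x kl_integrand f g x
  else ((a - 1)^-1)%:E * eln (\int[nu]_x renyi_integrand a f g x).

Definition is_density (mu nu : {measure set Y -> \bar R}) (f : Y -> R) :=
  [/\ measurable_fun setT f, (forall x, (0 <= f x)%R) &
      forall A, measurable A -> mu A = \int[nu]_(x in A) (f x)%:E].

End Renyi.

(* Main.v *)
Require Import Defs.
From HB Require Import structures.
From mathcomp Require Import all_boot all_order all_algebra.
From mathcomp Require Import all_classical all_reals all_analysis.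
From mathcomp Require Import measurable_realfun.
From mathcomp Require Import ring lra.
Import Order.TTheory GRing.Theory Num.Theory.
Local Open Scope classical_set_scope.
Local Open Scope ring_scope.


Section R.
Context {R : realType}.

Lemma taylor_neg (y : R) : y <= 0 -> expR y <= 1 + y + y^+2/2.
Proof.
move=> y0; have [->|yneg] := eqVneq y 0; first by rewrite expR0; lra.
have ylt : y < 0 by rewrite lt_neqAle yneg y0.
pose h := fun t : R => expR t - t - t^+2 / 2.
have dh : forall t : R, is_derive t 1 h (expR t - 1 - t).
  move=> t; rewrite /h.
  apply: is_derive_eq.
  by rewrite !scaler0 add0r /GRing.scale /= !mulr1; field.
have [c _ hc] := @MVT R h (fun t => expR t - 1 - t) y 0 ylt (fun t _ => dh t)
  (derivable_within_continuous (fun t _ => @ex_derive _ _ _ _ _ _ _ (dh t))).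
have := expR_ge1Dx c.
move: hc; rewrite /h expR0 => hc hc1.
have : 0 <= (expR c - 1 - c) * (0 - y) by apply: mulr_ge0; lra.
rewrite -hc; lra.
Qed.
End R.
Section R2.
Context {R : realType}.
Lemma taylor_pos (y : R) : 0 <= y -> expR y <= 1 + y + y^+2/2 * expR y.
Proof.
move=> y0; have [->|ypos] := eqVneq y 0; first by rewrite expR0; lra.
have ylt : 0 < y by rewrite lt_neqAle eq_sym ypos y0.
pose h := fun t : R => expR t - t - t^+2 / 2 * expR t.
have dh : forall t : R, is_derive t 1 h (expR t - 1 - (t^+2/2 * expR t + t * expR t)).
  move=> t; rewrite /h.
  apply: is_derive_eq.
  by rewrite !scaler0 /GRing.scale /= !mulr1; field.
have [c /[!in_itv] /= /andP[c0 cy] hc] := @MVT R h _ 0 y ylt (fun t _ => dh t)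
  (derivable_within_continuous (fun t _ => @ex_derive _ _ _ _ _ _ _ (dh t))).
have e1 := expR_ge1Dx (- c).
have e2 := expRxMexpNx_1 c.
have e3 := expR_gt0 c.
move: hc; rewrite /h expR0 => hc.
have : (expR c - 1 - (c^+2/2 * expR c + c * expR c)) * (y - 0) <= 0.
  apply: mulr_le0_ge0; last lra.
  nra.
rewrite -hc; lra.
Qed.

Lemma exp_conv (th y : R) : 0 <= th <= 1 -> expR (th * y) <= (1 - th) + th * expR y.
Proof.
move=> /andP[t0 t1].
have e1 := expR_ge1Dx (y - th * y).
have e2 := expR_ge1Dx (- (th * y)).
have ea : expR y = expR (th * y) * expR (y - th * y) by rewrite -expRD; congr expR; ring.
have eb : 1 = expR (th * y) * expR (- (th * y)) by rewrite expRxMexpNx_1.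
have ep := expR_gt0 (th * y).
set m := th * y in e1 e2 ea eb ep *.
rewrite ea.
have h1 : expR m * (1 + (y - m)) <= expR m * expR (y - m) by rewrite ler_pM2l.
have h2 : expR m * (1 - m) <= expR m * expR (- m) by rewrite ler_pM2l //; lra.
rewrite -eb in h2.
have hm : m = th * y by [].
clearbody m.
have k1 : th * (expR m * (1 + (y - m))) <= th * (expR m * expR (y - m)) by rewrite ler_wpM2l.
have k2 : (1 - th) * (expR m * (1 - m)) <= (1 - th) * 1 by rewrite ler_wpM2l //; lra.
subst m. nra.
Qed.

Lemma le_exp_m1 (x : R) : x <= expR (x - 1).
Proof. by have := expR_ge1Dx (x - 1); lra. Qed.

Lemma sq_exp_neg (z : R) : z < 0 -> z^+2 * expR z <= 4 * (expR 2)^-1.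
Proof.
move=> z0.
have h := le_exp_m1 (- z / 2).
have h2 : (- z / 2)^+2 <= expR (- z / 2 - 1) ^+ 2.
  have hx : 0 <= - z / 2 by lra.
  have := expR_ge0 (- z / 2 - 1); nra.
rewrite -expRM_natr in h2.
have : expR (z) * expR ((- z / 2 - 1) * 2%:R) = (expR 2)^-1.
  by rewrite -expRN -expRD; congr expR; rewrite mulr_natr mulr2n; field.
have := expR_gt0 z.
nra.
Qed.

Lemma sq_exp_pos (z v : R) : 0 < v -> 0 <= z -> z^+2 <= (2 / (v * expR 1))^+2 * expR (v * z).
Proof.
move=> v0 z0.
have h := le_exp_m1 (v * z / 2).
have ev := expR_gt0 1.
have ez : expR (v * z) = expR (v * z / 2 - 1) ^+ 2 * expR 1 ^+ 2.
  by rewrite -!expRM_natr -expRD; congr expR; rewrite !mulr_natr !mulr2n; field.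
rewrite ez.
have hp : 0 <= expR (v * z / 2 - 1) := expR_ge0 _.
set E := expR (v * z / 2 - 1) in h hp *.
have h2 : (v * z / 2)^+2 <= E^+2.
  have : 0 <= v * z / 2 by apply: divr_ge0 => //; exact: mulr_ge0 (ltW v0) z0.
  nra.
have -> : (2 / (v * expR 1)) ^+ 2 * (E ^+ 2 * expR 1 ^+ 2) = (2 / v)^+2 * E^+2.
  by field; rewrite gt_eqF //=; rewrite gt_eqF.
have -> : z^+2 = (2 / v)^+2 * (v * z / 2)^+2 by field; rewrite gt_eqF.
apply: ler_wpM2l => //; exact: sqr_ge0.
Qed.
End R2.

Section Core.
Context {R : realType}.
Implicit Types z s v P l p : R.

Lemma core0 l z : 1 < l -> 1 <= l^-1 * expR ((l - 1) * z) + (1 - l^-1) * expR (- z).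
Proof.
move=> l1.
have l0 : 0 < l by lra.
have th : 0 <= l^-1 <= 1.
  by apply/andP; split; [rewrite invr_ge0; lra | rewrite invf_le1 //; lra].
have h := exp_conv (l^-1) (l * z) th.
rewrite mulrA mulVf ?gt_eqF // mul1r in h.
have e1 : expR ((l - 1) * z) = expR (l * z) * expR (- z) by rewrite -expRD; congr expR; ring.
have e2 : expR z * expR (- z) = 1 by rewrite expRxMexpNx_1.
have ep := expR_gt0 (- z).
have hh := ler_wpM2r (ltW ep) h.
rewrite e2 in hh.
rewrite e1.
have -> : l^-1 * (expR (l * z) * expR (- z)) + (1 - l^-1) * expR (- z) =
  (1 - l^-1 + l^-1 * expR (l * z)) * expR (- z) by ring.
exact: hh.
Qed.

Lemma core2 P z : 0 < P -> z <= P^-1 * expR (P * z) + 1.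
Proof.
move=> P0; have h := expR_ge1Dx (P * z).
have e : z = P^-1 * (P * z) by field; rewrite gt_eqF.
have h1 : P^-1 * (P * z) <= P^-1 * (expR (P * z) - 1) by rewrite ler_pM2l ?invr_gt0 //; lra.
have h2 : P^-1 * (expR (P * z) - 1) <= P^-1 * expR (P * z) by rewrite ler_pM2l ?invr_gt0 //; lra.
rewrite {1}e; lra.
Qed.

Lemma core3 s k z : expR (s * k) * (1 + s * z - s * k) <= expR (s * z).
Proof.
have h := expR_ge1Dx (s * z - s * k).
have e : expR (s * z) = expR (s * k) * expR (s * z - s * k) by rewrite -expRD; congr expR; ring.
rewrite e ler_pM2l ?expR_gt0 //; lra.
Qed.

Lemma tangent p P c0 z : 0 < p <= P ->
  expR (p * z) <= (1 - p / P) * expR (p / P * c0) + p / P * expR ((p / P - 1) * c0) * expR (P * z).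
Proof.
move=> /andP[p0 pP].
have P0 : 0 < P by lra.
have th : 0 <= p / P <= 1.
  by apply/andP; split; [apply: divr_ge0; lra | rewrite ler_pdivrMr // mul1r].
have h := exp_conv (p / P) (P * z - c0) th.
have e1 : expR (p * z) = expR (p / P * (P * z - c0)) * expR (p / P * c0).
  by rewrite -expRD; congr expR; field; rewrite gt_eqF.
have e2 : expR ((p / P - 1) * c0) * expR (P * z) = expR (P * z - c0) * expR (p / P * c0).
  by rewrite -!expRD; congr expR; ring.
rewrite e1 -[p / P * _ * expR (P * z)]mulrA e2.
have hh := ler_wpM2r (expR_ge0 (p / P * c0)) h.
apply: (le_trans hh); rewrite le_eqVlt; apply/orP; left; apply/eqP; ring.
Qed.

Lemma core5 s v P c0 z : 0 < s -> 0 < v -> s + v <= P ->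
  expR (s * z) + s * expR (- z) <=
  (1 + s + (s^+2 / 2 * (2 / (v * expR 1))^+2) * ((1 - (s + v) / P) * expR ((s + v) / P * c0)))
  + s * (z + expR (- z) - 1) + (2 * s^+2 / expR 2) * expR (- z)
  + (s^+2 / 2 * (2 / (v * expR 1))^+2) * ((s + v) / P * expR (((s + v) / P - 1) * c0))
    * expR (P * z).
Proof.
move=> s0 v0 pP.
set C := s^+2 / 2 * (2 / (v * expR 1))^+2.
have C0 : 0 <= C by apply: mulr_ge0; [apply: divr_ge0; [exact: sqr_ge0|lra] | exact: sqr_ge0].
have hQ : expR ((s + v) * z) <= (1 - (s + v) / P) * expR ((s + v) / P * c0)
   + (s + v) / P * expR (((s + v) / P - 1) * c0) * expR (P * z).
  by apply: tangent; apply/andP; split => //; lra.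
set T1 := (1 - (s + v) / P) * expR ((s + v) / P * c0) in hQ *.
set T2 := (s + v) / P * expR (((s + v) / P - 1) * c0) in hQ *.
have ep := expR_gt0 ((s + v) * z).
have ez := expR_gt0 (- z).
suff : expR (s * z) - 1 - s * z <= 2 * s^+2 / expR 2 * expR (- z) + C * (T1 + T2 * expR (P * z)).
  move=> h; have -> : 1 + s + C * T1 + s * (z + expR (- z) - 1) + 2 * s ^+ 2 / expR 2 * expR (- z) +
    C * T2 * expR (P * z) = (expR (s * z) + s * expR (- z)) +
    (2 * s^+2 / expR 2 * expR (- z) + C * (T1 + T2 * expR (P * z)) - (expR (s * z) - 1 - s * z)) by ring.
  by rewrite lerDl subr_ge0.
have hCQ : 0 <= C * (T1 + T2 * expR (P * z)) by apply: mulr_ge0 => //; lra.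
have [zn|zp] := ltP z 0.
- have t : expR (s * z) <= 1 + s * z + (s * z)^+2 / 2 by apply: taylor_neg; nra.
  have q := sq_exp_neg z zn.
  have e1 : expR z * expR (- z) = 1 := expRxMexpNx_1 z.
  have e2 : expR 2 * expR (- 2) = 1 := expRxMexpNx_1 2.
  have e2p := expR_gt0 2.
  have q2 : z^+2 <= 4 / expR 2 * expR (- z).
    have := ler_wpM2r (ltW ez) q.
    have -> : z ^+ 2 * expR z * expR (- z) = z^+2 by rewrite -mulrA e1 mulr1.
    by [].
  have q3 : (s * z)^+2 / 2 <= 2 * s ^+ 2 / expR 2 * expR (- z).
    have := ler_wpM2l (_ : 0 <= s^+2 / 2) q2.
    have -> : s ^+ 2 / 2 * (4 / expR 2 * expR (- z)) = 2 * s ^+ 2 / expR 2 * expR (- z).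
      by field; rewrite gt_eqF.
    have -> : s ^+ 2 / 2 * z^+2 = (s * z)^+2 / 2 by ring.
    apply; apply: divr_ge0; [exact: sqr_ge0|lra].
  lra.
- have t : expR (s * z) <= 1 + s * z + (s * z)^+2 / 2 * expR (s * z) by apply: taylor_pos; nra.
  have q := sq_exp_pos z v v0 zp.
  have es := expR_gt0 (s * z).
  have q2 : (s * z)^+2 / 2 * expR (s * z) <= C * expR ((s + v) * z).
    have := ler_wpM2l (_ : 0 <= s^+2 / 2 * expR (s * z)) q.
    have -> : s ^+ 2 / 2 * expR (s * z) * ((2 / (v * expR 1)) ^+ 2 * expR (v * z)) =
      C * expR ((s + v) * z).
      by rewrite /C (mulrDl s v z) expRD; ring.
    have -> : s ^+ 2 / 2 * expR (s * z) * z^+2 = (s * z)^+2 / 2 * expR (s * z) by ring.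
    apply; apply: mulr_ge0; [apply: divr_ge0; [exact: sqr_ge0|lra] | lra].
  have q4 : C * expR ((s + v) * z) <= C * (T1 + T2 * expR (P * z)) by rewrite ler_wpM2l.
  have : 0 <= 2 * s ^+ 2 / expR 2 * expR (- z).
    apply: mulr_ge0; last lra.
    apply: divr_ge0; [apply: mulr_ge0; [lra|exact: sqr_ge0] | exact: expR_ge0].
  lra.
Qed.

Lemma tsum (th c0 a : R) : 0 <= th <= 1 -> a <= expR c0 ->
  (1 - th) * expR (th * c0) + th * expR ((th - 1) * c0) * a <= expR (th * c0).
Proof.
move=> /andP[t0 t1] ha.
have e : expR ((th - 1) * c0) * expR c0 = expR (th * c0) by rewrite -expRD; congr expR; ring.
have h : th * expR ((th - 1) * c0) * a <= th * expR ((th - 1) * c0) * expR c0.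
  by rewrite ler_wpM2l // mulr_ge0 // expR_ge0.
rewrite -[th * _ * expR c0]mulrA e in h.
lra.
Qed.
End Core.

Section Meas.
Context {d : measure_display} {Y : measurableType d} {R : realType}.
Variables (nu : {measure set Y -> \bar R}) (f g : Y -> R).
Hypotheses (mf : measurable_fun setT f) (mg : measurable_fun setT g).
Hypotheses (f0 : forall x, 0 <= f x) (g0 : forall x, 0 <= g x).

Lemma meas_renyi a : measurable_fun [set: Y] (renyi_integrand a f g : Y -> \bar R).
Proof.
rewrite /renyi_integrand; apply: measurable_fun_ifT.
- apply: measurable_and; first exact: measurable_fun_eqr.
  apply: measurable_and; last exact: measurable_cst.
  by apply: measurable_neg; exact: measurable_fun_eqr.
- exact: measurable_cst.
- apply/measurable_EFinP; apply: measurable_funM.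
  + exact: measurableT_comp (measurable_powR _) mf.
  + exact: measurableT_comp (measurable_powR _) mg.
Qed.

Lemma meas_kl : measurable_fun [set: Y] (kl_integrand f g : Y -> \bar R).
Proof.
have -> : kl_integrand f g = fun x => if f x == 0 then 0%E else if g x == 0 then +oo%E
    else (f x * (ln (f x) - ln (g x)))%:E.
  apply/funext => x; rewrite /kl_integrand.
  have [//|fx0] := eqVneq (f x) 0; have [//|gx0] := eqVneq (g x) 0.
  rewrite ln_div // posrE lt_neqAle eq_sym ?fx0 ?gx0 ?f0 ?g0 //.
apply: measurable_fun_ifT.
- exact: measurable_fun_eqr.
- exact: measurable_cst.
apply: measurable_fun_ifT.
- exact: measurable_fun_eqr.
- exact: measurable_cst.
apply/measurable_EFinP; apply: measurable_funM => //.
apply: measurable_funB.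
  exact: measurableT_comp (@measurable_ln R) mf.
  exact: measurableT_comp (@measurable_ln R) mg.
Qed.

Lemma pt_cases x : f x = 0 \/ (0 < f x /\ g x = 0) \/ (0 < f x /\ 0 < g x).
Proof.
have [fx|fx] := eqVneq (f x) 0; first by left.
have fp : 0 < f x by rewrite lt_neqAle eq_sym fx f0.
have [gx|gx] := eqVneq (g x) 0; first by right; left.
by right; right; split => //; rewrite lt_neqAle eq_sym gx g0.
Qed.

Lemma renyi_f0 a x : 0 < a -> f x = 0 -> renyi_integrand a f g x = 0%E.
Proof.
move=> a0 fx; rewrite /renyi_integrand fx eqxx andbF /= powR0 ?mul0r //.
by rewrite gt_eqF.
Qed.

Lemma renyi_g0 a x : 1 < a -> 0 < f x -> g x = 0 -> renyi_integrand a f g x = +oo%E.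
Proof.
by move=> a1 fp gx; rewrite /renyi_integrand gx eqxx (gt_eqF fp) a1.
Qed.

Lemma renyi_pos a x : 0 < f x -> 0 < g x ->
  renyi_integrand a f g x = (f x * expR ((a - 1) * (ln (f x) - ln (g x))))%:E.
Proof.
move=> fp gp; rewrite /renyi_integrand (gt_eqF gp) /=; congr EFin.
rewrite /powR (gt_eqF gp) (gt_eqF fp) -expRD.
have -> : f x * expR ((a - 1) * (ln (f x) - ln (g x))) =
   expR (ln (f x) + (a - 1) * (ln (f x) - ln (g x))).
  by rewrite expRD lnK // posrE.
congr expR; ring.
Qed.

Lemma kl_f0 x : f x = 0 -> kl_integrand f g x = 0%E.
Proof. by move=> fx; rewrite /kl_integrand fx eqxx. Qed.

Lemma kl_g0 x : 0 < f x -> g x = 0 -> kl_integrand f g x = +oo%E.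
Proof. by move=> fp gx; rewrite /kl_integrand gx eqxx (gt_eqF fp). Qed.

Lemma kl_pos x : 0 < f x -> 0 < g x ->
  kl_integrand f g x = (f x * (ln (f x) - ln (g x)))%:E.
Proof.
move=> fp gp; rewrite /kl_integrand (gt_eqF gp) (gt_eqF fp) ln_div //.
Qed.

Lemma g_pos x : 0 < f x -> 0 < g x ->
  g x = f x * expR (- (ln (f x) - ln (g x))).
Proof.
move=> fp gp.
have -> : f x * expR (- (ln (f x) - ln (g x))) = expR (ln (f x) + - (ln (f x) - ln (g x))).
  by rewrite expRD lnK // posrE.
by rewrite opprB addrC subrK lnK // posrE.
Qed.

Lemma renyi_ge0 a x : (0 <= renyi_integrand a f g x)%E.
Proof.
rewrite /renyi_integrand; case: ifP => // _.
by rewrite lee_fin; apply: mulr_ge0; exact: powR_ge0.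
Qed.

Definition good (h : Y -> \bar R) := (forall x, (0 <= h x)%E) /\ measurable_fun [set: Y] h.

Lemma good_lin {c h1 h2} : 0 <= c -> good h1 -> good h2 -> good (fun x => c%:E * h1 x + h2 x)%E.
Proof.
move=> c0 [p1 m1] [p2 m2]; split.
- by move=> x; apply: adde_ge0 => //; apply: mule_ge0.
- by apply: emeasurable_funD => //; exact: measurable_funeM.
Qed.

Lemma good_Z {c h} : 0 <= c -> good h -> good (fun x => c%:E * h x)%E.
Proof.
move=> c0 [p m]; split; first by move=> x; apply: mule_ge0.
exact: measurable_funeM.
Qed.

Lemma int_le (h1 h2 : Y -> \bar R) : good h1 -> good h2 -> (forall x, h1 x <= h2 x)%E ->
  (\int[nu]_x h1 x <= \int[nu]_x h2 x)%E.
Proof.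
move=> [p1 m1] [p2 m2] h12; apply: ge0_le_integral => //.
Qed.

Lemma int_lin c h1 h2 : 0 <= c -> good h1 -> good h2 ->
  (\int[nu]_x (c%:E * h1 x + h2 x) = c%:E * \int[nu]_x h1 x + \int[nu]_x h2 x)%E.
Proof.
move=> c0 [p1 m1] [p2 m2].
rewrite ge0_integralD //; first by rewrite ge0_integralZl_EFin.
- by move=> x _; apply: mule_ge0.
- exact: measurable_funeM.
Qed.

Lemma good_add {h1 h2} : good h1 -> good h2 -> good (fun x => h1 x + h2 x)%E.
Proof.
move=> [p1 m1] [p2 m2]; split; first by move=> x; apply: adde_ge0.
exact: emeasurable_funD.
Qed.

Lemma int_add h1 h2 : good h1 -> good h2 ->
  (\int[nu]_x (h1 x + h2 x) = \int[nu]_x h1 x + \int[nu]_x h2 x)%E.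
Proof. by move=> [p1 m1] [p2 m2]; rewrite ge0_integralD. Qed.

Lemma int_Z c h : 0 <= c -> good h ->
  (\int[nu]_x (c%:E * h x) = c%:E * \int[nu]_x h x)%E.
Proof. by move=> c0 [p m]; rewrite ge0_integralZl_EFin. Qed.
End Meas.

Lemma mulle {R : realType} (a X Y U V : R) : 0 <= a -> X <= Y -> U = a * X -> V = a * Y -> U <= V.
Proof. by move=> a0 XY -> ->; rewrite ler_wpM2l. Qed.

Lemma mulle' {R : realType} (a X Y U V : R) : 0 <= a -> X <= Y -> U - V = a * X - a * Y -> U <= V.
Proof.
move=> a0 XY e; rewrite -subr_le0 e subr_le0; exact: ler_wpM2l.
Qed.

Local Open Scope ereal_scope.

Theorem lemma26 (d : measure_display) (Y : measurableType d) (R : realType)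
  (w q nu : probability Y R) (f g : Y -> R)
  (hf : is_density w nu f) (hg : is_density q nu g)
  (gamma lambda eta : R)
  (hgamma : (0 <= gamma)%R) (hlambda : (1 < lambda)%R)
  (hD : renyi_div nu f g lambda <= gamma%:E)
  (heta : (1 < eta < lambda)%R) :
  let tau := Num.min (((lambda - eta) * gamma) / 2)%R 1%R in
  0 <= renyi_div nu f g eta - renyi_div nu f g 1 /\
  renyi_div nu f g eta - renyi_div nu f g 1 <=
    ((2 * (eta - 1)) / expR 2 *
     (1 + expR ((eta - 1) * gamma) * ((gamma * expR tau) / (2 * tau)) ^+ 2))%:E.
Proof.
move=> tau.
case: hf => mf f0 fA; case: hg => mg g0 gA.
have If : \int[nu]_x (f x)%:E = 1 by rewrite -fA //; apply: probability_setT.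
have Ig : \int[nu]_x (g x)%:E = 1 by rewrite -gA //; apply: probability_setT.
case/andP: heta => eta1 etal.
pose s := (eta - 1)%R; pose P := (lambda - 1)%R.
have s0 : (0 < s)%R by rewrite /s; lra.
have P0 : (0 < P)%R by rewrite /P; lra.
have sP : (s < P)%R by rewrite /s /P; lra.
pose F := fun x => (f x)%:E; pose G := fun x => (g x)%:E.
pose Rl := renyi_integrand lambda f g; pose Re := renyi_integrand eta f g.
pose H := fun x => kl_integrand f g x + (g x - f x)%:E.
have gF : good F by split => [x|]; [rewrite lee_fin | apply/measurable_EFinP].
have gG : good G by split => [x|]; [rewrite lee_fin | apply/measurable_EFinP].
have gRl : good Rl by split => [x|]; [exact: renyi_ge0 | exact: meas_renyi].
have gRe : good Re by split => [x|]; [exact: renyi_ge0 | exact: meas_renyi].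
have gH : good H.
  split => [x|].
    rewrite /H; case: (pt_cases f g f0 g0 x) => [fx|[[fp gx]|[fp gp]]].
    - by rewrite kl_f0 // fx subr0 add0e lee_fin.
    - by rewrite kl_g0 // addye.
    - rewrite kl_pos // -EFinD lee_fin.
      move: (g_pos f g x fp gp); set z := (ln (f x) - ln (g x))%R => ->.
      apply: (@mulle _ (f x) 0%R (z + expR (- z) - 1)%R); first exact: ltW.
      + by have := expR_ge1Dx (- z); lra.
      + by rewrite mulr0.
      + by ring.
  apply: emeasurable_funD; first exact: meas_kl.
  by apply/measurable_EFinP; apply: measurable_funB.
have li0 : (0 < lambda^-1)%R by rewrite invr_gt0; lra.
have li1 : (0 <= 1 - lambda^-1)%R by rewrite subr_ge0 invf_le1; lra.
have hA : 1 <= (lambda^-1)%:E * \int[nu]_x Rl x + (1 - lambda^-1)%:E.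
  have := @int_le _ _ _ nu F (fun x => (lambda^-1)%:E * Rl x + (1 - lambda^-1)%:E * G x)
    gF (good_lin (ltW li0) gRl (good_Z li1 gG)).
  rewrite If int_lin ?int_Z //; [|exact: ltW|exact: good_Z li1 gG].
  rewrite Ig mule1; apply => x.
  case: (pt_cases f g f0 g0 x) => [fx|[[fp gx]|[fp gp]]].
  - rewrite /F fx; exact: ((good_lin (ltW li0) gRl (good_Z li1 gG)).1 x).
  - rewrite /Rl renyi_g0 // gt0_muley ?lte_fin // addye ?leey //.
  - rewrite /F /Rl /G renyi_pos // -!EFinM -EFinD lee_fin.
    move: (g_pos f g x fp gp); set z := (ln (f x) - ln (g x))%R => ->.
    apply: (@mulle _ (f x) 1%R _ _ _ (ltW fp) (core0 lambda z hlambda)); ring.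
have hD' : (P^-1)%:E * eln (\int[nu]_x Rl x) <= gamma%:E.
  by move: hD; rewrite /renyi_div (gt_eqF hlambda).
have [a [Aa a1 aub]] : exists a, [/\ \int[nu]_x Rl x = a%:E, (1 <= a)%R & (a <= expR (P * gamma))%R].
  move: hA hD'; case: (\int[nu]_x Rl x) => [a| |] hA hD'.
  - have a1 : (1 <= a)%R.
      move: hA; rewrite -EFinM -EFinD lee_fin => hA.
      have : (lambda^-1 * 1 <= lambda^-1 * a)%R by lra.
      by rewrite ler_pM2l.
    exists a; split => //.
    move: hD'; rewrite /eln (gt_eqF (lt_le_trans ltr01 a1)) -EFinM lee_fin => hD'.
    have : (ln a <= P * gamma)%R.
      have := ler_wpM2l (ltW P0) hD'.
      by rewrite mulrA mulfV ?gt_eqF // mul1r.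
    by rewrite -ler_expR lnK // posrE (lt_le_trans ltr01 a1).
  - by move: hD'; rewrite /= gt0_muley ?lte_fin ?invr_gt0.
  - by move: hA; rewrite gt0_muleNy.
pose th := (s / P)%R; pose c0 := (P * gamma)%R.
have th0 : (0 < th)%R by apply: divr_gt0.
have th1 : (th <= 1)%R by rewrite /th ler_pdivrMr // mul1r ltW.
pose T1 := ((1 - th) * expR (th * c0))%R; pose T2 := (th * expR ((th - 1) * c0))%R.
have T10 : (0 <= T1)%R by apply: mulr_ge0; [lra | exact: expR_ge0].
have T20 : (0 < T2)%R by apply: mulr_gt0 => //; exact: expR_gt0.
have [b [Bb b0 bub]] : exists b, [/\ \int[nu]_x Re x = b%:E, (0 <= b)%R & (b <= expR (s * gamma))%R].
  have hB : \int[nu]_x Re x <= T1%:E + T2%:E * a%:E.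
    have := @int_le _ _ _ nu Re (fun x => T1%:E * F x + T2%:E * Rl x)
      gRe (good_lin T10 gF (good_Z (ltW T20) gRl)).
    rewrite int_lin ?int_Z //; [|exact: ltW|exact: good_Z (ltW T20) gRl].
    rewrite If Aa mule1; apply => x.
    case: (pt_cases f g f0 g0 x) => [fx|[[fp gx]|[fp gp]]].
    - rewrite /Re renyi_f0 //; last lra.
      exact: ((good_lin T10 gF (good_Z (ltW T20) gRl)).1 x).
    - by rewrite /Rl renyi_g0 // gt0_muley ?lte_fin // addey ?leey.
    - rewrite /F /Rl /Re renyi_pos // renyi_pos // -!EFinM -EFinD lee_fin.
      move: (g_pos f g x fp gp); set z := (ln (f x) - ln (g x))%R => _.
      rewrite -/s -/P.
      have ht : (0 < s <= P)%R by apply/andP; split => //; exact: ltW.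
      rewrite /T1 /T2 /th.
      apply: (@mulle _ (f x) _ _ _ _ (ltW fp) (@tangent _ s P c0 z ht)); ring.
  have thc : (th * c0 = s * gamma)%R by rewrite /th /c0; field; rewrite gt_eqF.
  have hB2 : \int[nu]_x Re x <= (expR (s * gamma))%:E.
    apply: (le_trans hB); rewrite -EFinM -EFinD lee_fin -thc.
    by apply: tsum; [rewrite th1 ltW | exact: aub].
  have hB0 : 0 <= \int[nu]_x Re x by apply: integral_ge0 => x _; exact: gRe.1.
  move: hB2 hB0; case: (\int[nu]_x Re x) => [b| |] //= hB2 hB0.
  by exists b; split => //; rewrite -lee_fin.
have Pi0 : (0 < P^-1)%R by rewrite invr_gt0.
have [k [Hk k0]] : exists k, \int[nu]_x H x = k%:E /\ (0 <= k)%R.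
  have hH : \int[nu]_x H x <= (P^-1)%:E * a%:E + 1.
    have := @int_le _ _ _ nu H (fun x => (P^-1)%:E * Rl x + G x)
      gH (good_lin (ltW Pi0) gRl gG).
    rewrite int_lin //; last exact: ltW.
    rewrite Ig Aa; apply => x.
    case: (pt_cases f g f0 g0 x) => [fx|[[fp gx]|[fp gp]]].
    - by rewrite /H /Rl kl_f0 // renyi_f0 // ?fx ?subr0 ?mule0 ?add0e //; lra.
    - by rewrite /Rl renyi_g0 // gt0_muley ?lte_fin // addye ?leey.
    - rewrite /H /G /Rl kl_pos // renyi_pos // -!EFinM -!EFinD lee_fin.
      move: (g_pos f g x fp gp); set z := (ln (f x) - ln (g x))%R => ->.
      rewrite -/P.
      have hc := core2 P z P0.
      apply: (@mulle _ (f x) (z + expR (- z) - 1)%R (P^-1 * expR (P * z) + expR (- z))%R);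
        [exact: ltW | lra | ring | ring].
  have hH0 : 0 <= \int[nu]_x H x by apply: integral_ge0 => x _; exact: gH.1.
  move: hH hH0; case: (\int[nu]_x H x) => [k| |] //= hH hH0.
  by exists k; split => //; rewrite -lee_fin.
have intg (h : Y -> \bar R) r : good h -> \int[nu]_x h x = r%:E -> nu.-integrable setT h.
  move=> [hp hm] hr; apply/integrableP; split => //.
  have -> : (fun x => `|h x|) = h by apply/funext => x; rewrite gee0_abs.
  by rewrite hr ltry.
have intF : nu.-integrable setT F by apply: (intg _ 1%R gF).
have intG : nu.-integrable setT G by apply: (intg _ 1%R gG).
have intH : nu.-integrable setT H by apply: (intg _ k gH).
have Kk : \int[nu]_x kl_integrand f g x = k%:E.
  have -> : kl_integrand f g = fun x => H x + (F x - G x).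
    apply/funext => x; rewrite /H /F /G.
    case: (pt_cases f g f0 g0 x) => [fx|[[fp gx]|[fp gp]]].
    - by rewrite kl_f0 // fx add0e -!EFinD; congr EFin; ring.
    - by rewrite kl_g0 // addye.
    - by rewrite kl_pos // -!EFinD; congr EFin; ring.
  rewrite integralD //; last exact: integrableB.
  by rewrite integralB_EFin // If Ig subee // adde0 Hk.
pose E := expR (s * k).
have E0 : (0 < E)%R := expR_gt0 _.
have Eb : (E <= b)%R.
  have c10 : (0 <= E + E * s)%R by apply: addr_ge0; [exact: ltW | apply: mulr_ge0; exact: ltW].
  have c20 : (0 <= E * s)%R by apply: mulr_ge0; exact: ltW.
  have c30 : (0 <= E * s * k)%R by apply: mulr_ge0.
  have g1 := good_lin c10 gF (good_Z c20 gH).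
  have g2 := good_add gRe (good_lin c30 gF (good_Z c20 gG)).
  have := @int_le _ _ _ nu _ _ g1 g2.
  rewrite int_lin ?int_Z //; last exact: good_Z c20 gH.
  rewrite int_add //; last exact: good_lin c30 gF (good_Z c20 gG).
  rewrite int_lin ?int_Z //; last exact: good_Z c20 gG.
  rewrite If Ig Hk Bb !mule1 -!EFinM -!EFinD lee_fin.
  move=> h; have {h} : (E + E * s + E * s * k <= b + (E * s * k + E * s))%R.
    apply: h => x.
    case: (pt_cases f g f0 g0 x) => [fx|[[fp gx]|[fp gp]]].
    - rewrite /F /G /H /Re kl_f0 // renyi_f0 // ?fx; last lra.
      rewrite add0e -!EFinM -!EFinD lee_fin; lra.
    - rewrite /Re renyi_g0 //.
      by rewrite addye ?leey.
    - rewrite /F /G /H /Re kl_pos // renyi_pos // -!EFinM -!EFinD lee_fin.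
      rewrite -/s.
      set z := (ln (f x) - ln (g x))%R.
      apply: (@mulle' _ (f x) _ _ _ _ (ltW fp) (core3 s k z)); rewrite /E; ring.
  lra.
have bpos : (0 < b)%R by apply: lt_le_trans E0 Eb.
have Bb' : \int[nu]_x renyi_integrand eta f g x = b%:E := Bb.
rewrite /renyi_div eqxx (gt_eqF eta1) Bb' Kk /eln (gt_eqF bpos) -EFinM -EFinB.
rewrite -/s.
have lnb : (s * k <= ln b)%R.
  by rewrite -ler_expR lnK ?posrE.
split.
  rewrite lee_fin subr_ge0.
  have : (s^-1 * (s * k) <= s^-1 * ln b)%R by rewrite ler_pM2l ?invr_gt0.
  by rewrite mulrA mulVf ?gt_eqF // mul1r.
rewrite lee_fin.
have bound0 : (0 <= 2 * s / expR 2 * (1 + expR (s * gamma) * (gamma * expR tau / (2 * tau)) ^+ 2))%R.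
  apply: mulr_ge0; first by apply: divr_ge0; [lra | exact: expR_ge0].
  apply: addr_ge0 => //; apply: mulr_ge0; [exact: expR_ge0 | exact: sqr_ge0].
have [g0'|gpos] := eqVneq gamma 0%R.
  have lnb0 : (ln b <= 0)%R.
    by apply: ln_le0; move: bub; rewrite g0' mulr0 expR0.
  have : (s^-1 * ln b <= 0)%R by apply: mulr_ge0_le0 => //; rewrite invr_ge0 ltW.
  lra.
have gp0 : (0 < gamma)%R by rewrite lt_neqAle eq_sym gpos hgamma.
have tau0 : (0 < tau)%R.
  rewrite /tau lt_min ltr01 andbT; apply: divr_gt0 => //; apply: mulr_gt0 => //; lra.
have taule : (tau <= (lambda - eta) * gamma / 2)%R by rewrite /tau ge_min lexx.
pose v := (2 * tau / gamma)%R.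
have v0 : (0 < v)%R by apply: divr_gt0 => //; lra.
have vle : (s + v <= P)%R.
  have : (v <= lambda - eta)%R.
    rewrite /v ler_pdivrMr //.
    lra.
  rewrite /s /P; lra.
pose th' := ((s + v) / P)%R.
pose C := (s^+2 / 2 * (2 / (v * expR 1))^+2)%R.
pose U1 := ((1 - th') * expR (th' * c0))%R.
pose U2 := (th' * expR ((th' - 1) * c0))%R.
pose c1 := (2 * s^+2 / expR 2)%R.
pose kk := (1 + s + C * U1)%R.
have C0 : (0 <= C)%R by apply: mulr_ge0; [apply: divr_ge0; [exact: sqr_ge0|lra] | exact: sqr_ge0].
have th'0 : (0 < th')%R by apply: divr_gt0 => //; lra.
have th'1 : (th' <= 1)%R by rewrite /th' ler_pdivrMr // mul1r.
have U10 : (0 <= U1)%R by apply: mulr_ge0; [lra | exact: expR_ge0].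
have U20 : (0 < U2)%R by apply: mulr_gt0 => //; exact: expR_gt0.
have c10 : (0 <= c1)%R.
  by apply: divr_ge0; [apply: mulr_ge0; [lra|exact: sqr_ge0] | exact: expR_ge0].
have k00 : (0 <= kk)%R by apply: addr_ge0; [lra | exact: mulr_ge0].
have CU20 : (0 <= C * U2)%R by apply: mulr_ge0 => //; exact: ltW.
have hb : (b + s <= kk + (s * k + (c1 + C * U2 * a)))%R.
  have g1 := good_add gRe (good_Z (ltW s0) gG).
  have g2 := good_lin k00 gF (good_lin (ltW s0) gH (good_lin c10 gG (good_Z CU20 gRl))).
  have := @int_le _ _ _ nu _ _ g1 g2.
  rewrite int_add //; last exact: good_Z (ltW s0) gG.
  rewrite int_Z //; last exact: ltW.
  rewrite int_lin //; last exact: good_lin (ltW s0) gH (good_lin c10 gG (good_Z CU20 gRl)).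
  rewrite int_lin //; [|exact: ltW|exact: good_lin c10 gG (good_Z CU20 gRl)].
  rewrite int_lin //; last exact: good_Z CU20 gRl.
  rewrite int_Z //.
  rewrite If Ig Hk Bb Aa !mule1 -!EFinM -!EFinD lee_fin; apply => x.
  case: (pt_cases f g f0 g0 x) => [fx|[[fp gx]|[fp gp]]].
  - rewrite /F /G /H /Re /Rl kl_f0 // !renyi_f0 // ?fx; [|lra|lra].
    have := mulr_ge0 c10 (g0 x).
    rewrite !add0e -!EFinM -!EFinD lee_fin; lra.
  - rewrite /H /Re /Rl kl_g0 // !renyi_g0 //.
    have Cp : (0 < C)%R.
      apply: mulr_gt0; first by apply: divr_gt0 => //; apply: exprn_gt0.
      by apply: exprn_gt0; apply: divr_gt0 => //; apply: mulr_gt0 => //; exact: expR_gt0.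
    rewrite addye // gt0_muley ?lte_fin //.
    rewrite gt0_muley; last by rewrite lte_fin; apply: mulr_gt0.
    rewrite [_ + +oo]addey; last by rewrite /G -EFinM.
    by [].
  - rewrite /F /G /H /Re /Rl kl_pos // !renyi_pos // -!EFinM -!EFinD lee_fin.
    rewrite -/s -/P.
    move: (g_pos f g x fp gp); set z := (ln (f x) - ln (g x))%R => ->.
    apply: (@mulle' _ (f x) _ _ _ _ (ltW fp) (@core5 _ s v P c0 z s0 v0 vle)).
    rewrite /kk /C /U1 /U2 /c1 /th'; ring.
have thc' : (th' * c0 = (s + v) * gamma)%R by rewrite /th' /c0; field; rewrite gt_eqF.
have hU : (U1 + U2 * a <= expR ((s + v) * gamma))%R.
  have th'01 : (0 <= th' <= 1)%R by rewrite th'1 ltW.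
  have := @tsum _ th' c0 a th'01 aub.
  by move=> h; rewrite /U1 /U2 -thc'.
have hb2 : (b <= 1 + s * k + c1 + C * expR ((s + v) * gamma))%R.
  have := ler_wpM2l C0 hU.
  move: hb; rewrite /kk; lra.
have lnb1 : (ln b <= b - 1)%R.
  have e : (1 + (b - 1) = b)%R by ring.
  have := @le_ln1Dx _ (b - 1)%R; rewrite e; apply; lra.
have key : (s^-1 * ln b - k <= s^-1 * (c1 + C * expR ((s + v) * gamma)))%R.
  have : (s^-1 * ln b <= s^-1 * (s * k + c1 + C * expR ((s + v) * gamma)))%R.
    rewrite ler_pM2l ?invr_gt0 //; lra.
  have -> : (s^-1 * (s * k + c1 + C * expR ((s + v) * gamma)) =
     k + s^-1 * (c1 + C * expR ((s + v) * gamma)))%R by field; rewrite gt_eqF.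
  lra.
apply: (le_trans key); rewrite le_eqVlt; apply/orP; left; apply/eqP.
have ev : expR ((s + v) * gamma) = (expR (s * gamma) * expR tau ^+ 2)%R.
  by rewrite -expRM_natr -expRD; congr expR; rewrite /v; field; rewrite gt_eqF.
have e2 : (expR 2 = expR 1 * expR 1 :> R)%R by rewrite -expRD; congr expR; ring.
rewrite ev /c1 /C /v e2.
field.
by rewrite (gt_eqF tau0) (gt_eqF (expR_gt0 1)) (gt_eqF gp0) (gt_eqF s0).
Qed.
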